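(* Let $E$ be a pseudo effect algebra satisfying (RDP). Then $\mathcal J(E)$ is an Abelian Dedekind complete lattice-ordered real vector space (Riesz space) under $\le^+$, and for any $m_1,\dots,m_n\in\mathcal J(E)$ and every $x\in E$: $$\Big(\bigvee_{i=1}^n m_i\Big)(x)=\sup\{m_1(x_1)+\cdots+m_n(x_n):\ x=x_1+\cdots+x_n,\ x_1,\dots,x_n\in E\},$$ $$\Big(\bigwedge_{i=1}^n m_i\Big)(x)=\inf\{m_1(x_1)+\cdots+m_n(x_n):\ x=x_1+\cdots+x_n,\ x_1,\dots,x_n\in E\}.$$
   Context: Pseudo effect algebra: partial algebra $(E;+,0,1)$ such that for all $a,b,c$: (i) $a+b$ and $(a+b)+c$ exist iff $b+c$ and $a+(b+c)$ exist, and then they are equal; (ii) there is exactly one $d$ and one $e$ with $a+d=e+a=1$; (iii) if $a+b$ exists there are $d,e$ with $a+b=d+a=b+e$; (iv) if $1+a$ or $a+1$ exists then $a=0$. (RDP): whenever $a_1+a_2=b_1+b_2$ there are $d_1,\dots,d_4$ with $d_1+d_2=a_1$, $d_3+d_4=a_2$, $d_1+d_3=b_1$, $d_2+d_4=b_2$. A signed measure is $m:E\to\mathbb R$ additive on defined sums; a measure is a nonnegative signed measure; $m_1\le^+m_2$ iff $m_2-m_1$ is a measure. $\mathcal J(E)$ is the set of signed measures that are differences of two measures, with pointwise operations. *)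

(* Defs.v *)
From Stdlib Require Import Reals.
Open Scope R_scope.

Section PEA.
Variable E : Type.
Variable add : E -> E -> option E.   (* partial operation + ; None = undefined *)
Variables zero one : E.

Definition obind (o : option E) (f : E -> option E) : option E :=
  match o with Some a => f a | None => None end.

Definition is_PEA : Prop :=
  (* (i): (a+b)+c defined iff a+(b+c) defined, and then equal *)
  (forall a b c, obind (add a b) (fun ab => add ab c)
              = obind (add b c) (fun bc => add a bc)) /\
  (forall a, (exists! d, add a d = Some one) /\ (exists! e, add e a = Some one)) /\
  (forall a b s, add a b = Some s ->
      exists d e, add d a = Some s /\ add b e = Some s) /\
  (forall a, ((exists s, add one a = Some s) \/ (exists s, add a one = Some s)) ->
      a = zero).

Definition RDP : Prop :=
  forall a1 a2 b1 b2 s, add a1 a2 = Some s -> add b1 b2 = Some s ->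
    exists d1 d2 d3 d4,
      add d1 d2 = Some a1 /\ add d3 d4 = Some a2 /\
      add d1 d3 = Some b1 /\ add d2 d4 = Some b2.

Definition signed_measure (m : E -> R) : Prop :=
  forall a b s, add a b = Some s -> m s = m a + m b.

Definition measure (m : E -> R) : Prop :=
  signed_measure m /\ forall x, 0 <= m x.

Definition le_plus (m1 m2 : E -> R) : Prop :=
  measure (fun x => m2 x - m1 x).

Definition inJ (m : E -> R) : Prop :=
  exists m1 m2, measure m1 /\ measure m2 /\ forall x, m x = m1 x - m2 x.

Fixpoint sumE (xs : nat -> E) (n : nat) : option E :=
  match n with
  | O => Some zero
  | S k => obind (sumE xs k) (fun s => add s (xs k))
  end.

End PEA.
Arguments is_PEA {E}. Arguments RDP {E}. Arguments signed_measure {E}.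
Arguments measure {E}. Arguments le_plus {E}. Arguments inJ {E}. Arguments sumE {E}. Arguments obind {E}.

Fixpoint rsum (f : nat -> R) (n : nat) : R :=
  match n with O => 0 | S k => rsum f k + f k end.

Definition is_glb (P : R -> Prop) (g : R) : Prop :=
  (forall r, P r -> g <= r) /\ (forall b, (forall r, P r -> b <= r) -> b <= g).

Definition is_sup_J {E} (add : E -> E -> option E) (S : (E -> R) -> Prop)
  (s : E -> R) : Prop :=
  inJ add s /\ (forall m, S m -> le_plus add m s) /\
  (forall u, inJ add u -> (forall m, S m -> le_plus add m u) -> le_plus add s u).

Definition is_inf_J {E} (add : E -> E -> option E) (S : (E -> R) -> Prop)
  (s : E -> R) : Prop :=
  inJ add s /\ (forall m, S m -> le_plus add s m) /\
  (forall u, inJ add u -> (forall m, S m -> le_plus add u m) -> le_plus add u s).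

Definition decomp_values {E} (add : E -> E -> option E) (zero : E)
  (ms : nat -> E -> R) (n : nat) (x : E) : R -> Prop :=
  fun r => exists xs : nat -> E,
    sumE add zero xs n = Some x /\ r = rsum (fun i => ms i (xs i)) n.

(* Main.v *)
Require Import Defs.
From Stdlib Require Import Reals Lra Lia FunctionalExtensionality.
Open Scope R_scope.

Section Alg.
Variable E : Type.
Variable add : E -> E -> option E.
Variables zero one : E.
Hypothesis HE : is_PEA add zero one.
Hypothesis Hrdp : RDP add.

Lemma assocF a b x y s : add a b = Some x -> add x y = Some s ->
  exists t, add b y = Some t /\ add a t = Some s.
Proof.
  intros H1 H2. destruct HE as [Ha _]. specialize (Ha a b y).
  rewrite H1 in Ha. simpl in Ha. rewrite H2 in Ha.
  destruct (add b y) as [t|] eqn:Ht; simpl in Ha; [|discriminate].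
  exists t; auto.
Qed.

Lemma assocB a b c y s : add b c = Some y -> add a y = Some s ->
  exists t, add a b = Some t /\ add t c = Some s.
Proof.
  intros H1 H2. destruct HE as [Ha _]. specialize (Ha a b c).
  rewrite H1 in Ha. simpl in Ha. rewrite H2 in Ha.
  destruct (add a b) as [t|] eqn:Ht; simpl in Ha; [|discriminate].
  exists t; auto.
Qed.

Lemma zero_one : add zero one = Some one.
Proof.
  destruct HE as [_ [Hii [_ Hiv]]]. destruct (Hii one) as [_ [e [He _]]].
  assert (e = zero) by (apply Hiv; right; eauto). subst; auto.
Qed.

Lemma one_zero : add one zero = Some one.
Proof.
  destruct HE as [_ [Hii [_ Hiv]]]. destruct (Hii one) as [[e [He _]] _].
  assert (e = zero) by (apply Hiv; left; eauto). subst; auto.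
Qed.

Lemma add_zero_r b : add b zero = Some b.
Proof.
  pose proof HE as [_ [Hii _]]. destruct (Hii b) as [_ [e [He _]]].
  destruct (assocF _ _ _ _ _ He one_zero) as [t [Ht1 Ht2]].
  destruct (Hii e) as [[d [Hd Hu]] _].
  assert (b = t). { rewrite <- (Hu b He). apply Hu; auto. }
  subst; auto.
Qed.

Lemma add_zero_l b : add zero b = Some b.
Proof.
  pose proof HE as [_ [Hii _]]. destruct (Hii b) as [[d [Hd _]] _].
  destruct (assocB _ _ _ _ _ Hd zero_one) as [t [Ht1 Ht2]].
  destruct (Hii d) as [_ [e [He Hu]]].
  assert (b = t). { rewrite <- (Hu b Hd). apply Hu; auto. }
  subst; auto.
Qed.


Definition sm := signed_measure add.

Lemma sm_zero m : sm m -> m zero = 0.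
Proof. intro H. pose proof (H _ _ _ (add_zero_l zero)). lra. Qed.

Lemma inJ_sm m : inJ add m -> sm m.
Proof.
  intros [p [q [[Hp _] [[Hq _] Hm]]]] a b s H.
  rewrite !Hm, (Hp _ _ _ H), (Hq _ _ _ H). lra.
Qed.

Lemma le_plus_pt a b : le_plus add a b -> forall x, a x <= b x.
Proof. intros [_ H] x. specialize (H x). simpl in H. lra. Qed.

Lemma le_plus_intro a b : sm a -> sm b -> (forall x, a x <= b x) -> le_plus add a b.
Proof.
  intros Ha Hb H. split.
  - intros u v s Huv. rewrite (Ha _ _ _ Huv), (Hb _ _ _ Huv). lra.
  - intro x. specialize (H x). lra.
Qed.

Lemma inJ_of_le a b : inJ add a -> sm b -> le_plus add a b -> inJ add b.
Proof.
  intros [p [q [Hp [Hq Ha]]]] Hb [Hd1 Hd2].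
  exists (fun x => p x + (b x - a x)), q. split; [split|split; [exact Hq|]].
  - intros u v s H. pose proof (proj1 Hp _ _ _ H). pose proof (Hd1 _ _ _ H). simpl in *. lra.
  - intro x. pose proof (proj2 Hp x). pose proof (Hd2 x). simpl in *. lra.
  - intro x. pose proof (Ha x). simpl. lra.
Qed.

Lemma inJ_bound m : inJ add m -> exists p, measure add p /\
  forall a b x, add a b = Some x -> m a <= p x /\ m b <= p x.
Proof.
  intros [p [q [[Hp Hp0] [[Hq Hq0] Hm]]]]. exists p. split; [split; auto|].
  intros a b x H. rewrite !Hm. rewrite (Hp _ _ _ H).
  pose proof (Hp0 a); pose proof (Hp0 b); pose proof (Hq0 a); pose proof (Hq0 b). lra.
Qed.

Lemma lub_le S l b : is_lub S l -> (forall r, S r -> r <= b) -> l <= b.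
Proof. intros [_ H] Hb. apply H. exact Hb. Qed.

Lemma le_lub S l r : is_lub S l -> S r -> r <= l.
Proof. intros [H _] Hr. apply H; auto. Qed.

Definition D2 (m1 m2 : E -> R) (x : E) : R -> Prop :=
  fun r => exists a b, add a b = Some x /\ r = m1 a + m2 b.

Lemma D2_lub_ex m1 m2 x : inJ add m1 -> inJ add m2 -> {l | is_lub (D2 m1 m2 x) l}.
Proof.
  intros H1 H2. apply completeness.
  - destruct (inJ_bound _ H1) as [p1 [_ Hp1]]. destruct (inJ_bound _ H2) as [p2 [_ Hp2]].
    exists (p1 x + p2 x). intros r [a [b [Hab ->]]].
    destruct (Hp1 _ _ _ Hab). destruct (Hp2 _ _ _ Hab). lra.
  - exists (m1 x + m2 zero). exists x, zero. split; auto. apply add_zero_r.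
Qed.

Lemma swap_decomp a b x c d y s : add a b = Some x -> add c d = Some y -> add x y = Some s ->
  exists p w, add p w = Some s /\ (forall m, sm m -> m p + m w = m a + m c + m b + m d)
   /\ (forall m, sm m -> m p = m a + m c) /\ (forall m, sm m -> m w = m b + m d).
Proof.
  intros Hab Hcd Hxy.
  destruct (assocF _ _ _ _ _ Hab Hxy) as [t [Hby Hat]].
  destruct (assocB _ _ _ _ _ Hcd Hby) as [u [Hbc Hud]].
  pose proof HE as [_ [_ [Hiii _]]].
  destruct (Hiii _ _ _ Hbc) as [c' [e [Hc'b _]]].
  destruct (assocF _ _ _ _ _ Hc'b Hud) as [w [Hbd Hc'w]].
  destruct (assocB _ _ _ _ _ Hc'w Hat) as [p [Hac' Hpw]].
  assert (Hc: forall m, sm m -> m c' = m c).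
  { intros m Hm. pose proof (Hm _ _ _ Hbc). pose proof (Hm _ _ _ Hc'b). lra. }
  exists p, w. split; auto.
  assert (Hp: forall m, sm m -> m p = m a + m c).
  { intros m Hm. rewrite (Hm _ _ _ Hac'), (Hc m Hm). lra. }
  assert (Hw: forall m, sm m -> m w = m b + m d).
  { intros m Hm. rewrite (Hm _ _ _ Hbd). lra. }
  split; [|split; auto]. intros m Hm. rewrite (Hp m Hm), (Hw m Hm). lra.
Qed.

Lemma join2 m1 m2 : inJ add m1 -> inJ add m2 ->
  exists j, inJ add j /\ le_plus add m1 j /\ le_plus add m2 j /\
   (forall u, inJ add u -> le_plus add m1 u -> le_plus add m2 u -> le_plus add j u) /\
   (forall x, is_lub (D2 m1 m2 x) (j x)).
Proof.
  intros H1 H2.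
  set (j := fun x => proj1_sig (D2_lub_ex m1 m2 x H1 H2)).
  assert (Hj : forall x, is_lub (D2 m1 m2 x) (j x)).
  { intro x. unfold j. destruct (D2_lub_ex m1 m2 x H1 H2); auto. }
  pose proof (inJ_sm _ H1) as S1. pose proof (inJ_sm _ H2) as S2.
  assert (Sj : sm j).
  { intros x y s Hxy. apply Rle_antisym.
    - apply (lub_le _ _ _ (Hj s)). intros r [u [v [Huv ->]]].
      destruct (Hrdp _ _ _ _ _ Huv Hxy) as [d1 [d2 [d3 [d4 [E1 [E2 [E3 E4]]]]]]].
      rewrite (S1 _ _ _ E1), (S2 _ _ _ E2).
      assert (m1 d1 + m2 d3 <= j x) by (apply (le_lub _ _ _ (Hj x)); exists d1, d3; auto).
      assert (m1 d2 + m2 d4 <= j y) by (apply (le_lub _ _ _ (Hj y)); exists d2, d4; auto).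
      lra.
    - assert (j x <= j s - j y); [|lra].
      apply (lub_le _ _ _ (Hj x)). intros r [a [b [Hab ->]]].
      assert (j y <= j s - (m1 a + m2 b)); [|lra].
      apply (lub_le _ _ _ (Hj y)). intros r [c [d [Hcd ->]]].
      destruct (swap_decomp _ _ _ _ _ _ _ Hab Hcd Hxy) as [p [w [Hpw [_ [Hp Hw]]]]].
      assert (m1 p + m2 w <= j s) by (apply (le_lub _ _ _ (Hj s)); exists p, w; auto).
      rewrite (Hp _ S1), (Hw _ S2) in H. lra. }
  assert (L1 : le_plus add m1 j).
  { apply le_plus_intro; auto. intro x. apply (le_lub _ _ _ (Hj x)).
    exists x, zero. split; [apply add_zero_r|]. rewrite (sm_zero _ S2). lra. }
  assert (L2 : le_plus add m2 j).
  { apply le_plus_intro; auto. intro x. apply (le_lub _ _ _ (Hj x)).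
    exists zero, x. split; [apply add_zero_l|]. rewrite (sm_zero _ S1). lra. }
  exists j. split; [apply (inJ_of_le m1); auto|]. split; auto. split; auto. split; auto.
  intros u Hu U1 U2. pose proof (inJ_sm _ Hu) as Su. apply le_plus_intro; auto.
  intro x. apply (lub_le _ _ _ (Hj x)). intros r [a [b [Hab ->]]].
  rewrite (Su _ _ _ Hab). pose proof (le_plus_pt _ _ U1 a). pose proof (le_plus_pt _ _ U2 b). lra.
Qed.


Lemma le_plus_trans a b c : le_plus add a b -> le_plus add b c -> le_plus add a c.
Proof.
  intros [H1 H2] [H3 H4]. split.
  - intros u v s H. pose proof (H1 _ _ _ H). pose proof (H3 _ _ _ H). simpl in *. lra.
  - intro x. pose proof (H2 x). pose proof (H4 x). simpl in *. lra.
Qed.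

Lemma le_plus_refl a : sm a -> le_plus add a a.
Proof. intro H. apply le_plus_intro; auto. intro; lra. Qed.

Lemma sup_unique S s1 s2 : is_sup_J add S s1 -> is_sup_J add S s2 -> forall x, s1 x = s2 x.
Proof.
  intros [J1 [U1 L1]] [J2 [U2 L2]] x.
  pose proof (le_plus_pt _ _ (L1 _ J2 U2) x). pose proof (le_plus_pt _ _ (L2 _ J1 U1) x). lra.
Qed.

Definition Fam (n : nat) (ms : nat -> E -> R) : (E -> R) -> Prop :=
  fun m => exists i, (i < n)%nat /\ m = ms i.

Lemma sumE_ext xs ys n : (forall i, (i < n)%nat -> xs i = ys i) -> sumE add zero xs n = sumE add zero ys n.
Proof.
  induction n; intro H; simpl; auto. rewrite IHn by (intros; apply H; lia).
  rewrite H by lia. auto.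
Qed.

Lemma rsum_ext f g n : (forall i, (i < n)%nat -> f i = g i) -> rsum f n = rsum g n.
Proof.
  induction n; intro H; simpl; auto. rewrite IHn by (intros; apply H; lia).
  rewrite H by lia. auto.
Qed.

Lemma joinN_ex k ms : (forall i, (i < S k)%nat -> inJ add (ms i)) ->
  exists s, is_sup_J add (Fam (S k) ms) s /\
     forall x, is_lub (decomp_values add zero ms (S k) x) (s x).
Proof.
  induction k; intro HJ.
  - exists (ms 0%nat). assert (J0 : inJ add (ms 0%nat)) by (apply HJ; lia).
    split; [split; [|split]|].
    + auto.
    + intros m [i [Hi ->]]. assert (i = 0%nat) by lia. subst. apply le_plus_refl, inJ_sm; auto.
    + intros u _ Hu. apply Hu. exists 0%nat; split; auto.
    + intro x. split.
      * intros r [xs [Hs ->]]. simpl in Hs. rewrite add_zero_l in Hs. injection Hs; intros Hx.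
        simpl. rewrite Hx. lra.
      * intros b Hb. assert (H := Hb (ms 0%nat x)). simpl in H.
        apply H. exists (fun _ => x). simpl. rewrite add_zero_l. split; auto. lra.
  - destruct (IHk (fun i Hi => HJ i ltac:(lia))) as [sk [[Jk [Uk Lk]] Hlk]].
    assert (Jm : inJ add (ms (S k))) by (apply HJ; lia).
    destruct (join2 _ _ Jk Jm) as [j [Jj [L1 [L2 [Lj Hj]]]]].
    exists j. split; [split; [|split]|].
    + auto.
    + intros m [i [Hi ->]]. destruct (Nat.eq_dec i (S k)) as [->|Hne]; auto.
      apply (le_plus_trans _ sk); auto. apply Uk. exists i; split; auto; lia.
    + intros u Hu Uu. apply Lj; auto.
      * apply Lk; auto. intros m [i [Hi ->]]. apply Uu. exists i; split; auto; lia.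
      * apply Uu. exists (S k); split; auto.
    + intro x. split.
      * intros r [xs [Hs ->]]. simpl in Hs.
        destruct (sumE add zero xs k) as [a0|] eqn:Ha0; simpl in Hs; [|discriminate].
        destruct (add a0 (xs k)) as [a|] eqn:Ha; simpl in Hs; [|discriminate].
        simpl.
        assert (rsum (fun i => ms i (xs i)) k + ms k (xs k) <= sk a).
        { apply (le_lub _ _ _ (Hlk a)). exists xs. split; auto. simpl. rewrite Ha0. simpl. auto. }
        assert (sk a + ms (S k) (xs (S k)) <= j x).
        { apply (le_lub _ _ _ (Hj x)). exists a, (xs (S k)). split; auto. }
        lra.
      * intros B HB. apply (lub_le _ _ _ (Hj x)). intros r [a [b [Hab ->]]].
        assert (sk a <= B - ms (S k) b); [|lra].
        apply (lub_le _ _ _ (Hlk a)). intros r [xs [Hs ->]].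
        set (ys := fun i => if Nat.eqb i (S k) then b else xs i).
        assert (Hsy : sumE add zero ys (S k) = sumE add zero xs (S k)).
        { apply sumE_ext. intros i Hi. unfold ys. destruct (Nat.eqb_spec i (S k)); auto. lia. }
        assert (Hry : rsum (fun i => ms i (ys i)) (S k) = rsum (fun i => ms i (xs i)) (S k)).
        { apply rsum_ext. intros i Hi. unfold ys. destruct (Nat.eqb_spec i (S k)); auto. lia. }
        assert (HH := HB (rsum (fun i => ms i (ys i)) (S k) + ms (S k) (ys (S k)))).
        assert (Hyk : ys (S k) = b) by (unfold ys; rewrite Nat.eqb_refl; auto).
        rewrite Hyk, Hry in HH.
        enough (rsum (fun i => ms i (xs i)) (S k) + ms (S k) b <= B) by lra.
        apply HH. exists ys. split.
        -- change (obind (sumE add zero ys (S k)) (fun s => add s (ys (S k))) = Some x).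
           rewrite Hsy, Hs, Hyk. simpl. auto.
        -- change (rsum (fun i => ms i (xs i)) (S k) + ms (S k) b =
              rsum (fun i => ms i (ys i)) (S k) + ms (S k) (ys (S k))).
           rewrite Hry, Hyk. auto.
Qed.


Definition neg (m : E -> R) : E -> R := fun x => - m x.

Lemma neg_neg m : neg (neg m) = m.
Proof. apply functional_extensionality; intro; unfold neg; lra. Qed.

Lemma inJ_neg m : inJ add m -> inJ add (neg m).
Proof.
  intros [p [q [Hp [Hq H]]]]. exists q, p. split; [exact Hq|split; [exact Hp|]].
  intro x. unfold neg. rewrite H. lra.
Qed.

Lemma le_plus_neg a b : le_plus add a b -> le_plus add (neg b) (neg a).
Proof.
  intros H. unfold le_plus, neg.
  replace (fun x => - a x - - b x) with (fun x => b x - a x); auto.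
  apply functional_extensionality; intro; lra.
Qed.

Lemma sup_to_inf S t : is_sup_J add (fun m => S (neg m)) t -> is_inf_J add S (neg t).
Proof.
  intros [Jt [Ut Lt]]. split; [apply inJ_neg; auto|split].
  - intros m Hm. rewrite <- (neg_neg m). apply le_plus_neg. apply Ut. rewrite neg_neg. auto.
  - intros u Hu Uu. rewrite <- (neg_neg u). apply le_plus_neg. apply Lt.
    + apply inJ_neg; auto.
    + intros m Hm. rewrite <- (neg_neg m). apply le_plus_neg. apply Uu; auto.
Qed.

Lemma inf_to_sup S s : is_inf_J add S s -> is_sup_J add (fun m => S (neg m)) (neg s).
Proof.
  intros [Js [Us Ls]]. split; [apply inJ_neg; auto|split].
  - intros m Hm. rewrite <- (neg_neg m). apply le_plus_neg. apply Us. auto.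
  - intros u Hu Uu. rewrite <- (neg_neg u). apply le_plus_neg. apply Ls.
    + apply inJ_neg; auto.
    + intros m Hm. rewrite <- (neg_neg m). apply le_plus_neg. apply Uu. rewrite neg_neg. auto.
Qed.

Lemma sup_equiv S S' s : (forall m, S m <-> S' m) -> is_sup_J add S s -> is_sup_J add S' s.
Proof.
  intros HS [J1 [U1 L1]]. split; auto. split.
  - intros m Hm. apply U1, HS; auto.
  - intros u Hu Uu. apply L1; auto. intros m Hm. apply Uu, HS; auto.
Qed.

Inductive Dir (S : (E -> R) -> Prop) : (E -> R) -> Prop :=
| dir_in m : S m -> Dir S m
| dir_join m1 m2 j : Dir S m1 -> Dir S m2 -> inJ add j -> le_plus add m1 j -> le_plus add m2 j ->
    (forall u, inJ add u -> le_plus add m1 u -> le_plus add m2 u -> le_plus add j u) -> Dir S j.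

Lemma dedekind S : (forall m, S m -> inJ add m) -> (exists m, S m) ->
  (exists u, inJ add u /\ forall m, S m -> le_plus add m u) -> exists s, is_sup_J add S s.
Proof.
  intros HJ [m0 Hm0] [u0 [Ju0 Uu0]].
  assert (DJ : forall v, Dir S v -> inJ add v) by (intros v Hv; destruct Hv; auto).
  assert (DU : forall v, Dir S v -> forall u, inJ add u -> (forall m, S m -> le_plus add m u) ->
     le_plus add v u).
  { intros v Hv; induction Hv; intros u Hu Uu; auto. }
  assert (Hex : forall x, {l | is_lub (fun r => exists v, Dir S v /\ r = v x) l}).
  { intro x. apply completeness.
    - exists (u0 x). intros r [v [Hv ->]]. apply le_plus_pt. apply DU; auto.
    - exists (m0 x), m0. split; auto. constructor; auto. }
  set (s := fun x => proj1_sig (Hex x)).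
  assert (Hs : forall x, is_lub (fun r => exists v, Dir S v /\ r = v x) (s x)).
  { intro x. unfold s. destruct (Hex x); auto. }
  assert (Ss : sm s).
  { intros a b c Hab. apply Rle_antisym.
    - apply (lub_le _ _ _ (Hs c)). intros r [v [Hv ->]].
      rewrite (inJ_sm _ (DJ _ Hv) _ _ _ Hab).
      assert (v a <= s a) by (apply (le_lub _ _ _ (Hs a)); eauto).
      assert (v b <= s b) by (apply (le_lub _ _ _ (Hs b)); eauto). lra.
    - assert (s a <= s c - s b); [|lra].
      apply (lub_le _ _ _ (Hs a)). intros r [v1 [Hv1 ->]].
      assert (s b <= s c - v1 a); [|lra].
      apply (lub_le _ _ _ (Hs b)). intros r [v2 [Hv2 ->]].
      destruct (join2 _ _ (DJ _ Hv1) (DJ _ Hv2)) as [j [Jj [L1 [L2 [Lj _]]]]].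
      assert (Dj : Dir S j) by (eapply dir_join; [exact Hv1|exact Hv2|..]; auto).
      assert (j c <= s c) by (apply (le_lub _ _ _ (Hs c)); eauto).
      rewrite (inJ_sm _ Jj _ _ _ Hab) in H.
      pose proof (le_plus_pt _ _ L1 a). pose proof (le_plus_pt _ _ L2 b). lra. }
  assert (Ub : forall m, S m -> le_plus add m s).
  { intros m Hm. apply le_plus_intro; auto. apply inJ_sm; auto.
    intro x. apply (le_lub _ _ _ (Hs x)). exists m; split; auto. constructor; auto. }
  exists s. split; [apply (inJ_of_le m0); auto|split; auto].
  intros u Hu Uu. apply le_plus_intro; auto. apply inJ_sm; auto.
  intro x. apply (lub_le _ _ _ (Hs x)). intros r [v [Hv ->]].
  apply le_plus_pt. apply DU; auto.
Qed.


Lemma rsum_neg f n : rsum (fun i => - f i) n = - rsum f n.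
Proof. induction n; simpl; [lra|]. rewrite IHn. lra. Qed.

Lemma lub_to_glb ms n x g :
  is_lub (decomp_values add zero (fun i => neg (ms i)) n x) g ->
  is_glb (decomp_values add zero ms n x) (- g).
Proof.
  intros [Hu Hl]. split.
  - intros r [xs [Hs ->]]. enough (- rsum (fun i => ms i (xs i)) n <= g) by lra.
    apply Hu. exists xs. split; auto. unfold neg. rewrite rsum_neg. auto.
  - intros b Hb. enough (g <= - b) by lra. apply Hl.
    intros r [xs [Hs ->]]. unfold neg. rewrite rsum_neg.
    enough (b <= rsum (fun i => ms i (xs i)) n) by lra. apply Hb. exists xs; auto.
Qed.

End Alg.
Arguments neg {E}. Arguments neg_neg {E}. Arguments le_plus_pt {E add}. Arguments sup_unique {E add}.
Arguments sup_to_inf {E add}. Arguments inf_to_sup {E add}. Arguments sup_equiv {E add}.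
Arguments inJ_neg {E add}. Arguments le_plus_neg {E add}. Arguments Fam {E}.

Theorem theorem3p6 (E : Type) (add : E -> E -> option E) (zero one : E)
  (HE : is_PEA add zero one) (Hrdp : RDP add) :
  (* J(E) is a real vector space under pointwise operations *)
  (inJ add (fun _ => 0)) /\
  (forall m1 m2, inJ add m1 -> inJ add m2 -> inJ add (fun x => m1 x + m2 x)) /\
  (forall (c : R) m, inJ add m -> inJ add (fun x => c * m x)) /\
  (* <=+ is a partial order on J(E) *)
  (forall m, inJ add m -> le_plus add m m) /\
  (forall m1 m2, inJ add m1 -> inJ add m2 ->
     le_plus add m1 m2 -> le_plus add m2 m1 -> forall x, m1 x = m2 x) /\
  (forall m1 m2 m3, inJ add m1 -> inJ add m2 -> inJ add m3 ->
     le_plus add m1 m2 -> le_plus add m2 m3 -> le_plus add m1 m3) /\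
  (* compatible with the vector space operations *)
  (forall m1 m2 m3, inJ add m1 -> inJ add m2 -> inJ add m3 ->
     le_plus add m1 m2 ->
     le_plus add (fun x => m1 x + m3 x) (fun x => m2 x + m3 x)) /\
  (forall (c : R) m1 m2, inJ add m1 -> inJ add m2 -> 0 <= c ->
     le_plus add m1 m2 -> le_plus add (fun x => c * m1 x) (fun x => c * m2 x)) /\
  (* Dedekind completeness *)
  (forall S : (E -> R) -> Prop, (forall m, S m -> inJ add m) -> (exists m, S m) ->
     (exists u, inJ add u /\ forall m, S m -> le_plus add m u) ->
     exists s, is_sup_J add S s) /\
  (forall S : (E -> R) -> Prop, (forall m, S m -> inJ add m) -> (exists m, S m) ->
     (exists l, inJ add l /\ forall m, S m -> le_plus add l m) ->
     exists s, is_inf_J add S s) /\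
  (* lattice: finite joins/meets exist and are given by the formulas *)
  (forall (n : nat) (ms : nat -> E -> R), (1 <= n)%nat ->
     (forall i, (i < n)%nat -> inJ add (ms i)) ->
     (exists s, is_sup_J add (fun m => exists i, (i < n)%nat /\ m = ms i) s) /\
     (exists s, is_inf_J add (fun m => exists i, (i < n)%nat /\ m = ms i) s) /\
     (forall s, is_sup_J add (fun m => exists i, (i < n)%nat /\ m = ms i) s ->
        forall x, is_lub (decomp_values add zero ms n x) (s x)) /\
     (forall s, is_inf_J add (fun m => exists i, (i < n)%nat /\ m = ms i) s ->
        forall x, is_glb (decomp_values add zero ms n x) (s x))).
Proof.
  assert (Hsm : forall m, inJ add m -> signed_measure add m) by (intros; apply inJ_sm; auto).
  split; [|split; [|split; [|split; [|split; [|split; [|split; [|split; [|split; [|split]]]]]]]]].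
  - exists (fun _ => 0), (fun _ => 0). split; [|split]; [split..|].
    all: try (intros; simpl; lra).
    all: intros a b s _; lra.
  - intros m1 m2 [p1 [q1 [[Hp1 Hp1'] [[Hq1 Hq1'] H1]]]] [p2 [q2 [[Hp2 Hp2'] [[Hq2 Hq2'] H2]]]].
    exists (fun x => p1 x + p2 x), (fun x => q1 x + q2 x).
    split; [split|split; [split|]].
    + intros a b s H. rewrite (Hp1 _ _ _ H), (Hp2 _ _ _ H). lra.
    + intro x. pose proof (Hp1' x); pose proof (Hp2' x); lra.
    + intros a b s H. rewrite (Hq1 _ _ _ H), (Hq2 _ _ _ H). lra.
    + intro x. pose proof (Hq1' x); pose proof (Hq2' x); lra.
    + intro x. rewrite H1, H2. lra.
  - intros c m [p [q [[Hp Hp'] [[Hq Hq'] H]]]].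
    destruct (Rle_dec 0 c) as [Hc|Hc].
    + exists (fun x => c * p x), (fun x => c * q x).
      split; [split|split; [split|]].
      * intros a b s Hs. rewrite (Hp _ _ _ Hs). lra.
      * intro x. pose proof (Hp' x). apply Rmult_le_pos; auto.
      * intros a b s Hs. rewrite (Hq _ _ _ Hs). lra.
      * intro x. pose proof (Hq' x). apply Rmult_le_pos; auto.
      * intro x. rewrite H. lra.
    + exists (fun x => (-c) * q x), (fun x => (-c) * p x).
      split; [split|split; [split|]].
      * intros a b s Hs. rewrite (Hq _ _ _ Hs). lra.
      * intro x. pose proof (Hq' x). apply Rmult_le_pos; auto; lra.
      * intros a b s Hs. rewrite (Hp _ _ _ Hs). lra.
      * intro x. pose proof (Hp' x). apply Rmult_le_pos; auto; lra.
      * intro x. rewrite H. lra.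
  - intros m Hm. apply le_plus_refl; apply Hsm; auto.
  - intros m1 m2 _ _ H1 H2 x. pose proof (le_plus_pt _ _ H1 x). pose proof (le_plus_pt _ _ H2 x). lra.
  - intros m1 m2 m3 _ _ _. apply le_plus_trans.
  - intros m1 m2 m3 J1 J2 J3 H. apply le_plus_intro.
    + intros a b s Hs. rewrite (Hsm _ J1 _ _ _ Hs), (Hsm _ J3 _ _ _ Hs). lra.
    + intros a b s Hs. rewrite (Hsm _ J2 _ _ _ Hs), (Hsm _ J3 _ _ _ Hs). lra.
    + intro x. pose proof (le_plus_pt _ _ H x). lra.
  - intros c m1 m2 J1 J2 Hc H. apply le_plus_intro.
    + intros a b s Hs. rewrite (Hsm _ J1 _ _ _ Hs). lra.
    + intros a b s Hs. rewrite (Hsm _ J2 _ _ _ Hs). lra.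
    + intro x. pose proof (le_plus_pt _ _ H x). apply Rmult_le_compat_l; auto.
  - apply (dedekind E add zero one HE Hrdp).
  - intros S HJ [m0 Hm0] [l [Jl Ll]].
    destruct (dedekind E add zero one HE Hrdp (fun m => S (neg m))) as [t Ht].
    + intros m Hm. rewrite <- (neg_neg m). apply inJ_neg; auto.
    + exists (neg m0). rewrite neg_neg. auto.
    + exists (neg l). split; [apply inJ_neg; auto|]. intros m Hm.
      rewrite <- (neg_neg m). apply le_plus_neg. auto.
    + exists (neg t). apply sup_to_inf; auto.
  - intros n ms Hn HJ. destruct n as [|k]; [lia|].
    destruct (joinN_ex E add zero one HE Hrdp k ms HJ) as [s0 [Hs0 Hl0]].
    assert (HJn : forall i, (i < S k)%nat -> inJ add (neg (ms i))) by (intros; apply inJ_neg; auto).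
    destruct (joinN_ex E add zero one HE Hrdp k (fun i => neg (ms i)) HJn) as [t0 [Ht0 Hlt0]].
    assert (Heq : forall m, Fam (S k) (fun i => neg (ms i)) m <->
                  (fun m => exists i, (i < S k)%nat /\ m = ms i) (neg m)).
    { intro m. split.
      - intros [i [Hi ->]]. exists i. split; auto. apply neg_neg.
      - intros [i [Hi Hm]]. exists i. split; auto. rewrite <- Hm, neg_neg. auto. }
    split; [|split; [|split]].
    + exists s0. exact Hs0.
    + exists (neg t0). apply sup_to_inf. eapply sup_equiv; [exact Heq|exact Ht0].
    + intros s Hs x. rewrite (sup_unique _ _ _ Hs Hs0 x). auto.
    + intros s Hs x. pose proof (inf_to_sup _ _ Hs) as Hs'.
      assert (Hs'' : is_sup_J add (Fam (S k) (fun i => neg (ms i))) (neg s)).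
      { eapply sup_equiv; [|exact Hs']. intro m. split; apply Heq. }
      pose proof (sup_unique _ _ _ Hs'' Ht0 x) as Hx. unfold neg in Hx at 1.
      replace (s x) with (- t0 x) by lra. apply lub_to_glb. auto.
Qed.
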